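(* Let $\gamma(s)$ be a non-geodesic arc-length parametrized curve immersed in a BCV space $M(a,b)$ with $4a\neq b^2$, with Frenet frame $\{T,N,B\}$. Then $T_3=\langle T,E_3\rangle$ is constant if and only if $N_3=\langle N,E_3\rangle=0$.
   Context: For real $a,b$, the BCV space $M(a,b)$ is $\{(x,y,z)\in\mathbb{R}^3:\lambda_a=1+a(x^2+y^2)>0\}$ with the metric $$g_{a,b}=\frac{dx^2+dy^2}{[1+a(x^2+y^2)]^2}+\left(dz+\frac{b}{2}\,\frac{y\,dx-x\,dy}{1+a(x^2+y^2)}\right)^2,$$ and $E_3=\partial_z$. The Frenet frame of a curve with nowhere vanishing curvature $\kappa=\lVert\nabla_TT\rVert$ is given by $\nabla_TT=\kappa N$, $\nabla_TN=-\kappa T+\tau B$, $\nabla_TB=-\tau N$, where $\nabla$ is the Levi-Civita connection. *)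

(* Defs.v *)
From Stdlib Require Import Reals.
From Coquelicot Require Import Coquelicot.
Open Scope R_scope.

(* Points / tangent vectors of R^3 in coordinates (x,y,z) = (p 0, p 1, p 2);
   only indices 0,1,2 are ever used. *)
Definition vec := nat -> R.

Definition sum3 (f : nat -> R) : R := f 0%nat + f 1%nat + f 2%nat.

Definition lam (a : R) (p : vec) : R := 1 + a * (p 0%nat ^ 2 + p 1%nat ^ 2).

(* coefficients of the 1-form  dz + (b/2)(y dx - x dy)/lambda_a *)
Definition omc (a b : R) (p : vec) (i : nat) : R :=
  match i with
  | 0%nat => b / 2 * p 1%nat / lam a p
  | 1%nat => - (b / 2 * p 0%nat / lam a p)
  | _ => 1
  end.

Definition flatc (a : R) (p : vec) (i j : nat) : R :=
  match i, j with
  | 0%nat, 0%nat => 1 / lam a p ^ 2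
  | 1%nat, 1%nat => 1 / lam a p ^ 2
  | _, _ => 0
  end.

Definition gBCV (a b : R) (p : vec) (i j : nat) : R :=
  flatc a p i j + omc a b p i * omc a b p j.

Definition ip (a b : R) (p : vec) (u v : vec) : R :=
  sum3 (fun i => sum3 (fun j => gBCV a b p i j * u i * v j)).

(* inverse metric via the (cyclic) cofactor formula for 3x3 matrices *)
Definition nxt (i : nat) : nat :=
  match i with 0%nat => 1%nat | 1%nat => 2%nat | _ => 0%nat end.

Definition cof (a b : R) (p : vec) (i j : nat) : R :=
  gBCV a b p (nxt i) (nxt j) * gBCV a b p (nxt (nxt i)) (nxt (nxt j))
  - gBCV a b p (nxt i) (nxt (nxt j)) * gBCV a b p (nxt (nxt i)) (nxt j).

Definition detg (a b : R) (p : vec) : R :=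
  sum3 (fun j => gBCV a b p 0%nat j * cof a b p 0%nat j).

Definition ginv (a b : R) (p : vec) (i j : nat) : R :=
  cof a b p j i / detg a b p.

Definition upd (p : vec) (l : nat) (t : R) : vec :=
  fun k => if Nat.eqb k l then t else p k.

Definition dg (a b : R) (p : vec) (l i j : nat) : R :=
  Derive (fun t => gBCV a b (upd p l t) i j) (p l).

Definition Gam (a b : R) (p : vec) (k i j : nat) : R :=
  sum3 (fun l => / 2 * ginv a b p k l *
                 (dg a b p i j l + dg a b p j i l - dg a b p l i j)).

Definition vel (gam : R -> vec) (s : R) : vec :=
  fun i => Derive (fun t => gam t i) s.

Definition covD (a b : R) (gam : R -> vec) (V : R -> vec) (s : R) : vec :=
  fun k => Derive (fun t => V t k) s
           + sum3 (fun i => sum3 (fun j =>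
               Gam a b (gam s) k i j * vel gam s i * V s j)).

Definition E3 : vec := fun i => match i with 2%nat => 1 | _ => 0 end.

Definition in_oint (lo hi : Rbar) (s : R) : Prop := Rbar_lt lo s /\ Rbar_lt s hi.

(* Main.v *)
Require Import Defs.
From Stdlib Require Import Reals Lra Classical.
From Coquelicot Require Import Coquelicot.
Open Scope R_scope.

Lemma gBCV_ext a b p q i j : p 0%nat = q 0%nat -> p 1%nat = q 1%nat ->
  gBCV a b p i j = gBCV a b q i j.
Proof. intros H0 H1. unfold gBCV, flatc, omc, lam. rewrite H0, H1. reflexivity. Qed.

Lemma gBCV_sym a b p i j : gBCV a b p i j = gBCV a b p j i.
Proof.
  unfold gBCV. f_equal.
  - destruct i as [|[|i]]; destruct j as [|[|j]]; reflexivity.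
  - apply Rmult_comm.
Qed.

Lemma g22 a b p : gBCV a b p 2 2 = 1.
Proof. unfold gBCV, flatc, omc. simpl. ring. Qed.

Lemma gi2 a b p i : gBCV a b p i 2 = omc a b p i.
Proof. unfold gBCV, flatc. destruct i as [|[|i]]; simpl; ring. Qed.

Lemma dg2 a b p i j : dg a b p 2 i j = 0.
Proof.
  unfold dg. rewrite (Derive_ext _ (fun _ => gBCV a b p i j)).
  - apply Derive_const.
  - intros t. apply gBCV_ext; reflexivity.
Qed.

Lemma dgl22 a b p l : dg a b p l 2 2 = 0.
Proof.
  unfold dg. rewrite (Derive_ext _ (fun _ => 1)).
  - apply Derive_const.
  - intros t. apply g22.
Qed.

Lemma ip_E3 a b p u : ip a b p u E3 = omc a b p 0 * u 0%nat + omc a b p 1 * u 1%nat + u 2%nat.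
Proof.
  unfold ip, sum3, E3. rewrite (gi2 a b p 0), (gi2 a b p 1), (gi2 a b p 2).
  change (omc a b p 2) with 1. ring.
Qed.

Lemma cofid (g : nat -> nat -> R) : g 1%nat 0%nat = g 0%nat 1%nat -> g 2%nat 0%nat = g 0%nat 2%nat -> g 2%nat 1%nat = g 1%nat 2%nat ->
  let C i j := g (nxt i) (nxt j) * g (nxt (nxt i)) (nxt (nxt j)) - g (nxt i) (nxt (nxt j)) * g (nxt (nxt i)) (nxt j) in
  sum3 (fun i => g i 2%nat * C 0%nat i) = 0 /\ sum3 (fun i => g i 2%nat * C 1%nat i) = 0 /\
  sum3 (fun i => g i 2%nat * C 2%nat i) = sum3 (fun j => g 0%nat j * C 0%nat j).
Proof. intros H H0 H1 C. unfold C, sum3; simpl. rewrite H, H0, H1. split; [ring|split; ring]. Qed.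

Lemma detg_val a b p : lam a p <> 0 -> detg a b p = 1 / lam a p ^ 4.
Proof. intros H. unfold detg, sum3, cof. simpl nxt. unfold gBCV, flatc, omc. field. auto. Qed.

Lemma lowering a b p : lam a p <> 0 ->
  sum3 (fun i => gBCV a b p i 2 * ginv a b p i 0) = 0 /\
  sum3 (fun i => gBCV a b p i 2 * ginv a b p i 1) = 0 /\
  sum3 (fun i => gBCV a b p i 2 * ginv a b p i 2) = 1.
Proof.
  intros Hl.
  assert (Hd : detg a b p <> 0).
  { rewrite detg_val by auto. unfold Rdiv. rewrite Rmult_1_l. apply Rinv_neq_0_compat. apply pow_nonzero; auto. }
  destruct (cofid (gBCV a b p) (gBCV_sym a b p 1 0) (gBCV_sym a b p 2 0) (gBCV_sym a b p 2 1)) as [E0 [E1 E2]].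
  assert (E0' : sum3 (fun i => gBCV a b p i 2 * cof a b p 0 i) = 0) by exact E0.
  assert (E1' : sum3 (fun i => gBCV a b p i 2 * cof a b p 1 i) = 0) by exact E1.
  assert (E2' : sum3 (fun i => gBCV a b p i 2 * cof a b p 2 i) = detg a b p) by exact E2.
  unfold ginv.
  assert (K : forall l, sum3 (fun i => gBCV a b p i 2 * (cof a b p l i / detg a b p)) =
     sum3 (fun i => gBCV a b p i 2 * cof a b p l i) / detg a b p).
  { intros l. unfold sum3, Rdiv. ring. }
  rewrite !K, E0', E1', E2'.
  split; [|split]; field; auto.
Qed.

Lemma Gam_lower a b p j k : lam a p <> 0 ->
  sum3 (fun i => gBCV a b p i 2 * Gam a b p i j k) =
  / 2 * (dg a b p j k 2 + dg a b p k j 2 - dg a b p 2 j k).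
Proof.
  intros Hl. destruct (lowering a b p Hl) as [L0 [L1 L2]].
  unfold Gam.
  transitivity (sum3 (fun l => / 2 * (dg a b p j k l + dg a b p k j l - dg a b p l j k) *
     sum3 (fun i => gBCV a b p i 2 * ginv a b p i l))).
  { unfold sum3. ring. }
  unfold sum3 at 1. rewrite L0, L1, L2. ring.
Qed.

Definition LL a (p : vec) := 1 + a * (p 0%nat ^ 2 + p 1%nat ^ 2).

Lemma dg002 a b p : lam a p <> 0 ->
  dg a b p 0 0 2 = - (b/2 * p 1%nat * (a * (2 * p 0%nat))) / (lam a p)^2.
Proof.
  intros Hl. unfold dg.
  rewrite (Derive_ext _ (fun t => b/2 * p 1%nat / (1 + a * (t^2 + p 1%nat ^2)))).
  - apply is_derive_unique. auto_derive.
    + unfold lam in Hl. rewrite !Rmult_1_r. rewrite <- !Rsqr_pow2 in Hl. unfold Rsqr in Hl. auto.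
    + unfold lam in *. field. auto.
  - intros t. rewrite gi2. cbv [omc lam upd Nat.eqb]. reflexivity.
Qed.

Lemma dg102 a b p : lam a p <> 0 ->
  dg a b p 1 0 2 = b/2 * (lam a p - p 1%nat * (a * (2 * p 1%nat))) / (lam a p)^2.
Proof.
  intros Hl. unfold dg.
  rewrite (Derive_ext _ (fun t => b/2 * t / (1 + a * (p 0%nat ^2 + t^2)))).
  - apply is_derive_unique. auto_derive.
    + unfold lam in Hl. rewrite !Rmult_1_r. rewrite <- !Rsqr_pow2 in Hl. unfold Rsqr in Hl. auto.
    + unfold lam in *. field. auto.
  - intros t. rewrite gi2. cbv [omc lam upd Nat.eqb]. reflexivity.
Qed.

Lemma dg012 a b p : lam a p <> 0 ->
  dg a b p 0 1 2 = - (b/2 * (lam a p - p 0%nat * (a * (2 * p 0%nat)))) / (lam a p)^2.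
Proof.
  intros Hl. unfold dg.
  rewrite (Derive_ext _ (fun t => - (b/2 * t / (1 + a * (t^2 + p 1%nat ^2))))).
  - apply is_derive_unique. auto_derive.
    + unfold lam in Hl. rewrite !Rmult_1_r. rewrite <- !Rsqr_pow2 in Hl. unfold Rsqr in Hl. auto.
    + unfold lam in *. field. auto.
  - intros t. rewrite gi2. cbv [omc lam upd Nat.eqb]. reflexivity.
Qed.

Lemma dg112 a b p : lam a p <> 0 ->
  dg a b p 1 1 2 = b/2 * p 0%nat * (a * (2 * p 1%nat)) / (lam a p)^2.
Proof.
  intros Hl. unfold dg.
  rewrite (Derive_ext _ (fun t => - (b/2 * p 0%nat / (1 + a * (p 0%nat ^2 + t^2))))).
  - apply is_derive_unique. auto_derive.
    + unfold lam in Hl. rewrite !Rmult_1_r. rewrite <- !Rsqr_pow2 in Hl. unfold Rsqr in Hl. auto.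
    + unfold lam in *. field. auto.
  - intros t. rewrite gi2. cbv [omc lam upd Nat.eqb]. reflexivity.
Qed.


Lemma chain_gen0 a b (x y : R -> R) s : 1 + a * (x s ^ 2 + y s ^ 2) <> 0 ->
  ex_derive x s -> ex_derive y s ->
  is_derive (fun t => b / 2 * y t / (1 + a * (x t ^ 2 + y t ^ 2))) s
   ((- (b/2 * y s * (a * (2 * x s))) / (1 + a * (x s ^ 2 + y s ^ 2))^2) * Derive x s +
    (b/2 * ((1 + a * (x s ^ 2 + y s ^ 2)) - y s * (a * (2 * y s))) / (1 + a * (x s ^ 2 + y s ^ 2))^2) * Derive y s).
Proof.
  intros Hl E0 E1.
  assert (Hl' : 1 + a * (x s * x s + y s * y s) <> 0) by (rewrite <- !Rsqr_pow2 in Hl; exact Hl).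
  auto_derive.
  - repeat split; auto. rewrite !Rmult_1_r. auto.
  - change (fun x0 : R => y x0) with y; change (fun x0 : R => x x0) with x. field; repeat split; auto.
Qed.

Lemma chain_gen1 a b (x y : R -> R) s : 1 + a * (x s ^ 2 + y s ^ 2) <> 0 ->
  ex_derive x s -> ex_derive y s ->
  is_derive (fun t => - (b / 2 * x t / (1 + a * (x t ^ 2 + y t ^ 2)))) s
   ((- (b/2 * ((1 + a * (x s ^ 2 + y s ^ 2)) - x s * (a * (2 * x s))))) / (1 + a * (x s ^ 2 + y s ^ 2))^2 * Derive x s +
    (b/2 * x s * (a * (2 * y s)) / (1 + a * (x s ^ 2 + y s ^ 2))^2) * Derive y s).
Proof.
  intros Hl E0 E1.
  assert (Hl' : 1 + a * (x s * x s + y s * y s) <> 0) by (rewrite <- !Rsqr_pow2 in Hl; exact Hl).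
  auto_derive.
  - repeat split; auto. rewrite !Rmult_1_r. auto.
  - change (fun x0 : R => y x0) with y; change (fun x0 : R => x x0) with x. field; repeat split; auto.
Qed.

Lemma chain0 a b (gam : R -> vec) s : lam a (gam s) <> 0 ->
  ex_derive (fun t => gam t 0%nat) s -> ex_derive (fun t => gam t 1%nat) s ->
  is_derive (fun t => omc a b (gam t) 0%nat) s
    (dg a b (gam s) 0 0 2 * vel gam s 0%nat + dg a b (gam s) 1 0 2 * vel gam s 1%nat).
Proof.
  intros Hl E0 E1. rewrite dg002, dg102 by auto. unfold vel.
  exact (chain_gen0 a b (fun t => gam t 0%nat) (fun t => gam t 1%nat) s Hl E0 E1).
Qed.

Lemma chain1 a b (gam : R -> vec) s : lam a (gam s) <> 0 ->
  ex_derive (fun t => gam t 0%nat) s -> ex_derive (fun t => gam t 1%nat) s ->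
  is_derive (fun t => omc a b (gam t) 1%nat) s
    (dg a b (gam s) 0 1 2 * vel gam s 0%nat + dg a b (gam s) 1 1 2 * vel gam s 1%nat).
Proof.
  intros Hl E0 E1. rewrite dg012, dg112 by auto. unfold vel.
  exact (chain_gen1 a b (fun t => gam t 0%nat) (fun t => gam t 1%nat) s Hl E0 E1).
Qed.

Lemma sum3_ext f g : (forall i, f i = g i) -> sum3 f = sum3 g.
Proof. intros H. unfold sum3. rewrite !H. reflexivity. Qed.

Lemma prod_gen (c0 c1 t0 t1 t2 : R -> R) s d0 d1 e0 e1 e2 :
  is_derive c0 s d0 -> is_derive c1 s d1 -> is_derive t0 s e0 -> is_derive t1 s e1 -> is_derive t2 s e2 ->
  is_derive (fun t => c0 t * t0 t + c1 t * t1 t + t2 t) s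
    (d0 * t0 s + c0 s * e0 + (d1 * t1 s + c1 s * e1) + e2).
Proof.
  intros H0 H1 H2 H3 H4. auto_derive.
  - repeat split; eexists; eassumption.
  - change (fun x : R => c0 x) with c0. change (fun x : R => c1 x) with c1.
    change (fun x : R => t0 x) with t0. change (fun x : R => t1 x) with t1.
    change (fun x : R => t2 x) with t2.
    rewrite (is_derive_unique _ _ _ H0), (is_derive_unique _ _ _ H1), (is_derive_unique _ _ _ H2),
      (is_derive_unique _ _ _ H3), (is_derive_unique _ _ _ H4). ring.
Qed.

Lemma T3_deriv a b (gam T N : R -> vec) (kappa : R -> R) s :
  lam a (gam s) <> 0 ->
  ex_derive (fun t => gam t 0%nat) s -> ex_derive (fun t => gam t 1%nat) s ->
  (forall i, (i <= 2)%nat -> ex_derive (fun t => T t i) s) ->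
  (forall i, T s i = vel gam s i) ->
  (forall k, (k <= 2)%nat -> covD a b gam T s k = kappa s * N s k) ->
  is_derive (fun t => ip a b (gam t) (T t) E3) s (kappa s * ip a b (gam s) (N s) E3).
Proof.
  intros Hl Eg0 Eg1 ET HTv Hcov.
  apply is_derive_ext with (fun t => omc a b (gam t) 0%nat * T t 0%nat + omc a b (gam t) 1%nat * T t 1%nat + T t 2%nat).
  { intros t. symmetry. apply ip_E3. }
  assert (HD := prod_gen _ _ _ _ _ s _ _ _ _ _ (chain0 a b gam s Hl Eg0 Eg1) (chain1 a b gam s Hl Eg0 Eg1)
    (Derive_correct _ _ (ET 0%nat ltac:(auto))) (Derive_correct _ _ (ET 1%nat ltac:(auto)))
    (Derive_correct _ _ (ET 2%nat ltac:(auto)))).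
  replace (kappa s * ip a b (gam s) (N s) E3) with
    ((dg a b (gam s) 0 0 2 * vel gam s 0%nat + dg a b (gam s) 1 0 2 * vel gam s 1%nat) * T s 0%nat +
     omc a b (gam s) 0 * Derive (fun t => T t 0%nat) s +
     ((dg a b (gam s) 0 1 2 * vel gam s 0%nat + dg a b (gam s) 1 1 2 * vel gam s 1%nat) * T s 1%nat +
     omc a b (gam s) 1 * Derive (fun t => T t 1%nat) s) + Derive (fun t => T t 2%nat) s).
  { cbv beta in HD. exact HD. }
  set (p := gam s).
  assert (C0 := Hcov 0%nat ltac:(auto)). assert (C1 := Hcov 1%nat ltac:(auto)). assert (C2 := Hcov 2%nat ltac:(auto)).
  unfold covD in C0, C1, C2. fold p in C0, C1, C2.
  set (S k := sum3 (fun i => sum3 (fun j => Gam a b p k i j * vel gam s i * T s j))).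
  change (sum3 _) with (S 0%nat) in C0. change (sum3 _) with (S 1%nat) in C1. change (sum3 _) with (S 2%nat) in C2.
  assert (KS : omc a b p 0 * S 0%nat + omc a b p 1 * S 1%nat + S 2%nat =
     sum3 (fun i => sum3 (fun j => vel gam s i * T s j *
        (/ 2 * (dg a b p i j 2 + dg a b p j i 2 - dg a b p 2 i j))))).
  { transitivity (sum3 (fun i => sum3 (fun j => vel gam s i * T s j *
        sum3 (fun k => gBCV a b p k 2 * Gam a b p k i j)))).
    - unfold S, sum3. rewrite !gi2. change (omc a b p 2) with 1. ring.
    - apply sum3_ext; intros i; apply sum3_ext; intros j. rewrite Gam_lower by exact Hl. reflexivity. }
  rewrite ip_E3.
  unfold sum3 in KS. rewrite !dg2, !dgl22 in KS.
  rewrite <- !HTv in KS. rewrite <- !HTv.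
  replace (Derive (fun t => T t 0%nat) s) with (kappa s * N s 0%nat - S 0%nat) by lra.
  replace (Derive (fun t => T t 1%nat) s) with (kappa s * N s 1%nat - S 1%nat) by lra.
  replace (Derive (fun t => T t 2%nat) s) with (kappa s * N s 2%nat - S 2%nat) by lra.
  match goal with |- ?A = ?B => change (@eq R A B) end.
  transitivity (kappa s * (omc a b p 0 * N s 0%nat + omc a b p 1 * N s 1%nat + N s 2%nat)
     - (omc a b p 0 * S 0%nat + omc a b p 1 * S 1%nat + S 2%nat)
     + ((dg a b p 0 0 2 * T s 0%nat + dg a b p 1 0 2 * T s 1%nat) * T s 0%nat +
       (dg a b p 0 1 2 * T s 0%nat + dg a b p 1 1 2 * T s 1%nat) * T s 1%nat)).
  - ring.
  - rewrite KS. field.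
Qed.

Lemma oint_conv lo hi s0 s x : in_oint lo hi s0 -> in_oint lo hi s ->
  Rmin s0 s <= x <= Rmax s0 s -> in_oint lo hi x.
Proof.
  unfold in_oint, Rmin, Rmax. intros [A1 A2] [B1 B2] Hx.
  destruct (Rle_dec s0 s); destruct lo, hi; simpl in *; repeat split; try lra; auto.
Qed.

Lemma oint_loc lo hi s : in_oint lo hi s -> locally s (in_oint lo hi).
Proof.
  intros [H1 H2]. unfold in_oint. apply filter_and.
  - exact (open_Rbar_gt' (Finite s) lo H1).
  - exact (open_Rbar_lt' (Finite s) hi H2).
Qed.

Theorem lemma4p7 (a b : R) (lo hi : Rbar) (gam T N B : R -> vec) (kappa tau : R -> R) :
  4 * a <> b ^ 2 ->
  Rbar_lt lo hi ->
  (forall s, in_oint lo hi s -> 0 < lam a (gam s)) ->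
  (forall s i, in_oint lo hi s -> (i <= 2)%nat ->
     ex_derive (fun t => gam t i) s /\ ex_derive (fun t => T t i) s /\
     ex_derive (fun t => N t i) s /\ ex_derive (fun t => B t i) s) ->
  (forall s i, in_oint lo hi s -> T s i = vel gam s i) ->
  (forall s, in_oint lo hi s ->
     ip a b (gam s) (T s) (T s) = 1 /\ ip a b (gam s) (N s) (N s) = 1 /\
     ip a b (gam s) (B s) (B s) = 1 /\ ip a b (gam s) (T s) (N s) = 0 /\
     ip a b (gam s) (T s) (B s) = 0 /\ ip a b (gam s) (N s) (B s) = 0) ->
  (forall s, in_oint lo hi s -> 0 < kappa s) ->
  (forall s k, in_oint lo hi s -> (k <= 2)%nat ->
     covD a b gam T s k = kappa s * N s k /\
     covD a b gam N s k = - kappa s * T s k + tau s * B s k /\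
     covD a b gam B s k = - tau s * N s k) ->
  ((exists c, forall s, in_oint lo hi s -> ip a b (gam s) (T s) E3 = c) <->
   (forall s, in_oint lo hi s -> ip a b (gam s) (N s) E3 = 0)).
Proof.
  intros Hab Hlh Hlam Hder HTv Horth Hk Hfr.
  assert (Hd : forall s, in_oint lo hi s ->
    is_derive (fun t => ip a b (gam t) (T t) E3) s (kappa s * ip a b (gam s) (N s) E3)).
  { intros s Hs. apply T3_deriv.
    - apply Rgt_not_eq, Hlam, Hs.
    - apply (proj1 (Hder s 0%nat Hs ltac:(auto))).
    - apply (proj1 (Hder s 1%nat Hs ltac:(auto))).
    - intros i Hi. apply (Hder s i Hs Hi).
    - intros i. apply HTv, Hs.
    - intros k Hk'. apply (proj1 (Hfr s k Hs Hk')). }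
  split.
  - intros [c Hc] s Hs.
    assert (D0 : is_derive (fun t => ip a b (gam t) (T t) E3) s 0).
    { apply is_derive_ext_loc with (fun _ => c).
      - apply (filter_imp (in_oint lo hi)); [|apply oint_loc, Hs].
        intros t Ht. symmetry. apply Hc, Ht.
      - auto_derive; auto; ring. }
    assert (E := is_derive_unique _ _ _ (Hd s Hs)).
    rewrite (is_derive_unique _ _ _ D0) in E.
    assert (Hks := Hk s Hs).
    destruct (Rmult_integral _ _ (eq_sym E)) as [H0|H0]; [lra|exact H0].
  - intros H0.
    destruct (classic (exists s0, in_oint lo hi s0)) as [[s0 Hs0]|Hn].
    + exists (ip a b (gam s0) (T s0) E3). intros s Hs.
      destruct (MVT_gen (fun t => ip a b (gam t) (T t) E3) s0 s
                 (fun t => kappa t * ip a b (gam t) (N t) E3)) as [c [Hc Heq]].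
      * intros x Hx. apply Hd. apply (oint_conv lo hi s0 s); auto; lra.
      * intros x Hx. apply continuity_pt_filterlim. apply (ex_derive_continuous (K:=R_AbsRing) (V:=R_NormedModule)).
        eexists. apply Hd. apply (oint_conv lo hi s0 s); auto.
      * rewrite H0 in Heq by (apply (oint_conv lo hi s0 s); auto). lra.
    + exists 0. intros s Hs. exfalso. apply Hn. exists s. exact Hs.
Qed.
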